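(* Let $D$ be an arc-colored complete digraph of order $n\geq 4$. If $D$ contains no rainbow triangle, then there is a vertex $v\in V(D)$ with $d^{s}(v)\leq\lfloor\frac{n}{2}\rfloor$.
   Context: The complete digraph on $n$ vertices has both arcs $xy,yx$ for every pair of distinct vertices. An arc-coloring is any map $C:A(D)\to\mathbb{N}$. A rainbow triangle is a directed 3-cycle with pairwise distinct arc colors. A color $c$ used in $D$ is saturated by $v$ if every arc of color $c$ is incident to $v$; $d^{s}(v)$ is the number of colors saturated by $v$. *)

(* Defs.v *)
From mathcomp Require Import all_boot.
Set Implicit Arguments. Unset Strict Implicit. Unset Printing Implicit Defensive.

(* Complete digraph on vertex set 'I_n: every ordered pair (x,y) with x != y is an arc.
   An arc-coloring is C : 'I_n -> 'I_n -> nat; only values on arcs (x != y) matter. *)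
Definition arc_coloring (n : nat) := 'I_n -> 'I_n -> nat.

Definition used_colors n (C : arc_coloring n) : seq nat :=
  undup [seq C a.1 a.2 | a <- enum [pred a : 'I_n * 'I_n | a.1 != a.2]].

Definition rainbow_triangle n (C : arc_coloring n) (x y z : 'I_n) : bool :=
  [&& x != y, y != z, z != x,
      C x y != C y z, C y z != C z x & C z x != C x y].

Definition has_rainbow_triangle n (C : arc_coloring n) : Prop :=
  exists x y z, rainbow_triangle C x y z.

Definition saturated_by n (C : arc_coloring n) (v : 'I_n) (c : nat) : bool :=
  [forall x : 'I_n, forall y : 'I_n,
     ((x != y) && (C x y == c)) ==> ((x == v) || (y == v))].

Definition sat_degree n (C : arc_coloring n) (v : 'I_n) : nat :=
  count (saturated_by C v) (used_colors C).

(* Main.v *)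
Require Import Defs.
From mathcomp Require Import all_boot.
From mathcomp Require Import zify.
Set Implicit Arguments. Unset Strict Implicit. Unset Printing Implicit Defensive.

Section S.
Variable n : nat.
Implicit Types (C : arc_coloring n).

Lemma sat_inc C v c x y : saturated_by C v c -> x != y -> C x y = c ->
  (x == v) || (y == v).
Proof.
move=> /forallP/(_ x)/forallP/(_ y)/implyP H xy Cxy; apply: H.
by rewrite xy Cxy eqxx.
Qed.

Lemma used_ex C c : c \in used_colors C -> exists x y, x != y /\ C x y = c.
Proof.
rewrite /used_colors mem_undup => /mapP [[x y]]; rewrite mem_enum /= => xy ->.
by exists x, y.
Qed.

Lemma ex_used C x y : x != y -> C x y \in used_colors C.
Proof.
move=> xy; rewrite mem_undup; apply/mapP; exists (x, y) => //.
by rewrite mem_enum.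
Qed.

Lemma count_le (T : eqType) (P : pred T) s s2 : uniq s ->
  (forall x, x \in s -> P x -> x \in s2) -> count P s <= size s2.
Proof.
move=> us H; rewrite -size_filter; apply: uniq_leq_size; first exact: filter_uniq.
move=> x; rewrite mem_filter => /andP [Px xs]; exact: H.
Qed.

Lemma fact1 C v u w : ~ has_rainbow_triangle C ->
  (forall y, y != v -> ~~ saturated_by C v (C y v)) ->
  u != v -> w != v -> u != w -> saturated_by C v (C v u) -> C u w = C w v.
Proof.
move=> NR out uv wv uw su; apply/eqP; apply/negPn/negP => ne; apply: NR.
exists v, u, w.
rewrite /rainbow_triangle eq_sym uv uw wv ne /=.
apply/andP; split.
- apply/negP => /eqP e. have := sat_inc su uw (esym e).
  by rewrite (negbTE uv) (negbTE wv).
- apply/negP => /eqP e. have := out w wv. by rewrite e su.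
Qed.

Lemma mixpair C w u x : ~ has_rainbow_triangle C ->
  u != w -> x != w -> u != x ->
  saturated_by C w (C w u) -> saturated_by C w (C x w) -> C w u = C x w.
Proof.
move=> NR uw xw ux s1 s2; apply/eqP; apply/negPn/negP => ne; apply: NR.
exists w, u, x.
rewrite /rainbow_triangle eq_sym uw ux xw (eq_sym (C x w)) ne /= andbT.
apply/andP; split.
- apply/negP => /eqP e. have := sat_inc s1 ux (esym e).
  by rewrite (negbTE uw) (negbTE xw).
- apply/negP => /eqP e. have := sat_inc s2 ux e.
  by rewrite (negbTE uw) (negbTE xw).
Qed.

Lemma mixed C w u0 x0 : ~ has_rainbow_triangle C ->
  u0 != w -> saturated_by C w (C w u0) ->
  x0 != w -> saturated_by C w (C x0 w) -> sat_degree C w <= 2.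
Proof.
move=> NR u0w su0 x0w sx0.
have MP := mixpair NR.
case: (eqVneq u0 x0) => [eux | ne].
  subst x0.
  rewrite /sat_degree; apply: (count_le (s2 := [:: C w u0; C u0 w])) (undup_uniq _) _.
  move=> d /used_ex [p [q [pq <-]]] sd.
  have := sat_inc sd pq erefl => /orP [/eqP pw | /eqP qw]; subst.
  - case: (eqVneq q u0) => [->|qn]; first by rewrite inE eqxx.
    rewrite (MP w q u0) ?inE ?eqxx ?orbT // eq_sym //.
  - case: (eqVneq p u0) => [->|pn]; first by rewrite !inE eqxx orbT.
    rewrite -(MP w u0 p) ?inE ?eqxx ?orbT // eq_sym //.
have a_eq : C w u0 = C x0 w by apply: MP.
rewrite /sat_degree; apply: (count_le (s2 := [:: C w u0;
   if saturated_by C w (C u0 w) then C u0 w else C w x0])) (undup_uniq _) _.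
move=> d /used_ex [p [q [pq <-]]] sd.
have := sat_inc sd pq erefl => /orP [/eqP pw | /eqP qw]; subst.
- case: (eqVneq q x0) => [eq|qn].
    subst q. case: ifP => h; last by rewrite !inE eqxx orbT.
    rewrite (MP w x0 u0) ?inE ?eqxx ?orbT // eq_sym //.
  rewrite (MP w q x0) ?inE -?a_eq ?eqxx ?orbT // eq_sym //.
- case: (eqVneq p u0) => [eq|pn].
    subst p. by rewrite sd !inE eqxx orbT.
  rewrite -(MP w u0 p) ?inE ?eqxx ?orbT // eq_sym //.
Qed.

Definition tr C : arc_coloring n := fun x y => C y x.

Lemma sat_tr1 C v c : saturated_by C v c -> saturated_by (tr C) v c.
Proof.
move=> H; apply/forallP => x; apply/forallP => y; apply/implyP => /andP [xy /eqP e].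
have := sat_inc H (y := x) (x := y); rewrite eq_sym orbC; apply => //.
Qed.

Lemma sat_tr C v c : saturated_by (tr C) v c = saturated_by C v c.
Proof. apply/idP/idP; [exact: (@sat_tr1 (tr C)) | exact: sat_tr1]. Qed.

Lemma used_tr1 C c : c \in used_colors C -> c \in used_colors (tr C).
Proof. move=> /used_ex [x [y [xy <-]]]. rewrite eq_sym in xy. exact: (ex_used (tr C) xy). Qed.

Lemma sdeg_tr C v : sat_degree (tr C) v = sat_degree C v.
Proof.
rewrite /sat_degree.
have -> : count (saturated_by (tr C) v) (used_colors (tr C)) =
          count (saturated_by C v) (used_colors (tr C)).
  by apply: eq_count => c; rewrite sat_tr.
have P : perm_eq (used_colors (tr C)) (used_colors C).
  apply: uniq_perm; rewrite ?undup_uniq // => c.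
  apply/idP/idP; [exact: (@used_tr1 (tr C)) | exact: used_tr1].
by move/permP: P => P; apply: P.
Qed.

Lemma nr_tr C : ~ has_rainbow_triangle C -> ~ has_rainbow_triangle (tr C).
Proof.
move=> NR [x [y [z H]]]; apply: NR; exists x, z, y.
move: H; rewrite /rainbow_triangle /tr.
case/andP => h1 /andP [h2 /andP [h3 /andP [h4 /andP [h5 h6]]]].
rewrite eq_sym in h1; rewrite eq_sym in h2; rewrite eq_sym in h3.
rewrite eq_sym in h4; rewrite eq_sym in h5; rewrite eq_sym in h6.
by rewrite h1 h2 h3 h4 h5 h6.
Qed.


Lemma out_lemma C v m : ~ has_rainbow_triangle C ->
  (forall y, y != v -> ~~ saturated_by C v (C y v)) ->
  (forall w, m <= sat_degree C w) -> 2 < m -> n < 2 * m -> False.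
Proof.
move=> NR out all m3 nm.
have : 0 < sat_degree C v by have := all v; lia.
rewrite /sat_degree -has_count => /hasP [c /used_ex [a [b [ab <-]]] sc].
have := sat_inc sc ab erefl => /orP [/eqP av | /eqP bv]; last first.
  by subst b; move: (out a ab); rewrite sc.
subst a.
have bv : b != v by rewrite eq_sym.
set T := [set y | (y == v) || ~~ saturated_by C v (C v y)].
set W := [set y | (y != v) && saturated_by C v (C v y)].
have TW : T = ~: W by apply/setP => y; rewrite !inE negb_and negbK.
have hW : sat_degree C v <= #|W|.
  rewrite /sat_degree -(size_image (fun y => C v y)).
  apply: count_le (undup_uniq _) _ => d /used_ex [p [q [pq <-]]] sd.
  have := sat_inc sd pq erefl => /orP [/eqP pv | /eqP qv]; last first.
    by subst q; move: (out p pq); rewrite sd.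
  subst p; apply: (image_f (fun y => C v y)).
  by rewrite inE eq_sym pq sd.
have hT : sat_degree C b <= #|T|.
  case: (boolP [exists y, (y != b) && saturated_by C b (C b y)]) =>
      [/existsP [y /andP [yb sy]] | noout].
  - have noin : forall x, x != b -> ~~ saturated_by C b (C x b).
      move=> x xb; apply/negP => sx.
      have := mixed NR yb sy xb sx; have := all b; lia.
    rewrite /sat_degree -(size_image (fun y => C b y)).
    apply: count_le (undup_uniq _) _ => d /used_ex [p [q [pq <-]]] sd.
    have := sat_inc sd pq erefl => /orP [/eqP pb | /eqP qb]; last first.
      by subst q; move: (noin p pq); rewrite sd.
    subst p; apply: (image_f (fun y => C b y)).
    case: (eqVneq q v) => [->|qv]; first by rewrite inE eqxx.
    have e := fact1 NR out bv qv pq sc.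
    have := sat_inc sd qv (esym e).
    by rewrite eq_sym (negbTE pq) eq_sym (negbTE bv).
  - have noout' : forall y, y != b -> ~~ saturated_by C b (C b y).
      move=> y yb; apply/negP => sy; move/existsP: noout; apply.
      by exists y; rewrite yb sy.
    rewrite /sat_degree -(size_image (fun y => C y b)).
    apply: count_le (undup_uniq _) _ => d /used_ex [p [q [pq <-]]] sd.
    have := sat_inc sd pq erefl => /orP [/eqP pb | /eqP qb].
      by subst p; have := noout' q; rewrite eq_sym pq => /(_ isT); rewrite sd.
    subst q; apply: (image_f (fun y => C y b)).
    rewrite inE; case: (eqVneq p v) => //= pv.
    apply/negP => sp.
    have e := fact1 NR out pv bv pq sp.
    by have := noout' v ab; rewrite -e sd.
have := cardsC W; rewrite -TW card_ord.
have := all v; have := all b; lia.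
Qed.

End S.

Theorem lemma2 (n : nat) (C : arc_coloring n) :
  4 <= n -> ~ has_rainbow_triangle C ->
  exists v : 'I_n, sat_degree C v <= n./2.
Proof.
move=> n4 NR.
case: (boolP [exists v, sat_degree C v <= n./2]) => [/existsP [v h] | H].
  by exists v.
exfalso.
have all : forall w, n./2.+1 <= sat_degree C w.
  move=> w; rewrite ltnNge; apply/negP => h; move/existsP: H; apply.
  by exists w.
have hn := odd_double_half n; rewrite -addnn in hn.
have ho := leq_b1 (odd n).
have m3 : 2 < n./2.+1 by lia.
have nm : n < 2 * n./2.+1 by lia.
have n0 : 0 < n by lia.
pose v0 := Ordinal n0.
case: (boolP [exists y, (y != v0) && saturated_by C v0 (C y v0)]) =>
    [/existsP [y /andP [yv sy]] | noin].
- have noout : forall x, x != v0 -> ~~ saturated_by (tr C) v0 (tr C x v0).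
    move=> x xv; rewrite sat_tr /tr; apply/negP => sx.
    have := mixed NR xv sx yv sy; have := all v0; lia.
  apply: (out_lemma (nr_tr NR) noout _ m3 nm) => w.
  by rewrite sdeg_tr.
- have noin' : forall y, y != v0 -> ~~ saturated_by C v0 (C y v0).
    move=> y yv; apply/negP => sy; move/existsP: noin; apply.
    by exists y; rewrite yv sy.
  exact: (out_lemma NR noin' all m3 nm).
Qed.
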